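(* Consider the shared-link caching network described in the context, with $m$ files, $n$ users, cache sizes $M_1,\dots,M_n$ and demand distribution $\mathbf{Q}=[q_{f,u}]$. Let $\mathbf{P}=[p_{f,u}]$ be any caching distribution with $0\le M_u p_{f,u}\le 1$ for all $f,u$ and $\sum_{f=1}^m p_{f,u}=1$ for all $u$. Use the random caching algorithm with caching distribution $\mathbf{P}$ and chromatic-number index coding (CIC) delivery, and let $$\bar R(\mathbf{P},\mathbf{Q}) = \lim_{B\to\infty}\mathbb{E}\big[\chi(\mathsf{H}_{\mathsf{C},\mathsf{W}})/B \,\big|\, \mathsf{C}\big],$$ where the expectation is over the random demands only, so that $\bar R(\mathbf{P},\mathbf{Q})$ is a random variable depending on the random caching configuration $\mathsf{C}$. Define $$\bar m=\sum_{f=1}^m \Big(1-\prod_{u=1}^n (1-q_{f,u})\Big),$$ and $$\psi(\mathbf{P},\mathbf{Q})=\sum_{\ell=1}^n\ \sum_{\mathcal{U}^\ell\subset\mathcal{U},\,|\mathcal{U}^\ell|=\ell}\ \sum_{f=1}^m\ \sum_{u\in\mathcal{U}^\ell}\rho_{f,u,\mathcal{U}^\ell}\,\lambda(u,f),$$ where, for a set $\mathcal{U}^\ell$ of $\ell$ users, $u\in\mathcal{U}^\ell$ and a file $f_u$, $$\lambda(u,f_u)=(1-p_{f_u,u}M_u)\prod_{k\in\mathcal{U}^\ell\setminus\{u\}}(p_{f_u,k}M_k)\prod_{k\in\mathcal{U}\setminus\mathcal{U}^\ell}(1-p_{f_u,k}M_k),$$ and $$\rho_{f,u,\mathcal{U}^\ell}=\mathbb{P}\Big(f=\arg\max_{f_u\in\mathbf{f}(\mathcal{U}^\ell)}\lambda(u,f_u)\Big),$$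 the probability (over the random request vector) that $f$ is the file maximizing $\lambda(u,\cdot)$ among $\mathbf{f}(\mathcal{U}^\ell)$, the set of files requested by the users in $\mathcal{U}^\ell$. Then, with high probability, $$\bar R(\mathbf{P},\mathbf{Q})\le \bar R^{\rm ub}(\mathbf{P},\mathbf{Q}):=\min\{\psi(\mathbf{P},\mathbf{Q}),\ \bar m\},$$ where ''with high probability'' means $\lim_{B\to\infty}\mathbb{P}\big(\bar R(\mathbf{P},\mathbf{Q})\le \bar R^{\rm ub}(\mathbf{P},\mathbf{Q})\big)=1$, the probability being over the random caching configuration.
   Context: Network: a source has access to a library $\mathcal{F}=\{1,\dots,m\}$ of $m$ files, each of $F$ bits, and is connected to $n$ users $\mathcal{U}=\{1,\dots,n\}$ through a shared error-free multicast link; rate is measured in units of file size. User $u$ has a cache of $M_uF$ bits ($M_u$ files). User $u$ requests file $f$ with probability $q_{f,u}$ (with $\sum_f q_{f,u}=1$), users' requests being independent; $\mathbf{f}=(f_1,\dots,f_n)$ denotes the random request vector. Each file is split into $B$ equal-size packets. Random caching algorithm with caching distribution $\mathbf{P}$: for each file $f$, each user $u$ independently caches a subset $\mathbf{C}_{u,f}$ of $p_{f,u}M_uB$ distinct packets of file $f$ chosen uniformly at random; $\mathbf{C}$ denotes the resulting (random) caching configuration. $\mathbf{W}$ denotes the packet-level demand: user $u$ requests the packets of file $f_u$ not in its cache. Conflict graph $\mathcal{H}_{\mathbf{C},\mathbf{W}}=(\mathcal{V},\mathcal{E})$: each packet requested by each user is a distinct vertex $v$, identified by its packet identity $\rho(v)$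 and requesting user $\mu(v)$; $v_1$ interferes with $v_2$ if packet $\rho(v_1)$ is not in the cache of user $\mu(v_2)$ and $\rho(v_1),\rho(v_2)$ are not the same packet; there is an undirected edge between $v_1,v_2$ if either interferes with the other. CIC delivery: take a minimum vertex coloring of the conflict graph and transmit, for each color, the modulo sum of the packets with that color; the number of transmissions is the chromatic number $\chi(\mathcal{H}_{\mathbf{C},\mathbf{W}})$, giving rate $\chi/B$. *)

(* Defs.v *)
From HB Require Import structures.
From mathcomp Require Import all_boot all_order all_algebra.
From mathcomp Require Import all_classical all_reals all_analysis.
Set Implicit Arguments. Unset Strict Implicit. Unset Printing Implicit Defensive.
Import Order.TTheory GRing.Theory Num.Theory.
Local Open Scope ring_scope.

(* Graph with vertex set V (a subset of a finite type T) and edge relation e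
   (loops, if any, are ignored). *)
Definition colorable (T : finType) (V : {set T}) (e : rel T) (k : nat) : bool :=
  [exists c : {ffun T -> 'I_k},
     [forall x in V, forall y in V, ((x != y) && e x y) ==> (c x != c y)]].

Lemma colorable_card (T : finType) (V : {set T}) (e : rel T) :
  exists k, colorable V e k.
Proof.
exists #|T|; apply/existsP; exists [ffun x => enum_rank x].
apply/forallP => x; apply/implyP => _; apply/forallP => y; apply/implyP => _.
apply/implyP => /andP[nxy _]; rewrite !ffunE.
by apply: contra nxy => /eqP /enum_rank_inj ->.
Qed.

Definition chromatic (T : finType) (V : {set T}) (e : rel T) : nat :=
  ex_minn (colorable_card V e).

Section Caching.
Variables (R : realType) (m n : nat).
Variables (M : 'I_n -> R) (q p : 'I_m -> 'I_n -> R).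

(* number of packets of file f cached by user u when files have B packets:
   p_{f,u} M_u B (rounded down when it is not an integer) *)
Definition ncached (B : nat) (f : 'I_m) (u : 'I_n) : nat :=
  Num.truncn (p f u * M u * B%:R).

(* caching configuration: C u f = set of packets of file f cached by user u *)
Definition config (B : nat) := {ffun 'I_n -> {ffun 'I_m -> {set 'I_B}}}.

(* probability of configuration C under the random caching algorithm:
   independently for each (u,f), a uniformly random subset of size
   ncached B f u *)
Definition cache_prob (B : nat) (C : config B) : R :=
  \prod_(u : 'I_n) \prod_(f : 'I_m)
     ((#|C u f| == ncached B f u)%:R / ('C(B, ncached B f u))%:R).

Definition demand := {ffun 'I_n -> 'I_m}.
Definition demand_prob (d : demand) : R := \prod_(u : 'I_n) q (d u) u.

(* conflict graph H_{C,W}: vertex (u,j) = packet j of file d u requested by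
   user u (i.e. not in its cache); packet identity rho(u,j) = (d u, j),
   requesting user mu(u,j) = u *)
Definition cg_vertices (B : nat) (C : config B) (d : demand) : {set 'I_n * 'I_B} :=
  [set v | v.2 \notin C v.1 (d v.1)].

Definition cg_interferes (B : nat) (C : config B) (d : demand)
  (v1 v2 : 'I_n * 'I_B) : bool :=
  (v1.2 \notin C v2.1 (d v1.1)) && ((d v1.1, v1.2) != (d v2.1, v2.2)).

Definition cg_edge (B : nat) (C : config B) (d : demand) : rel ('I_n * 'I_B) :=
  fun v1 v2 => (v1 != v2) && (cg_interferes C d v1 v2 || cg_interferes C d v2 v1).

Definition cic_transmissions (B : nat) (C : config B) (d : demand) : nat :=
  chromatic (cg_vertices C d) (cg_edge C d).

Definition cond_rate (B : nat) (C : config B) : R :=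
  \sum_(d : demand) demand_prob d * ((cic_transmissions C d)%:R / B%:R).

Definition mbar : R := \sum_(f : 'I_m) (1 - \prod_(u : 'I_n) (1 - q f u)).

Definition lambda (U : {set 'I_n}) (u : 'I_n) (f : 'I_m) : R :=
  (1 - p f u * M u) * (\prod_(k in U :\ u) (p f k * M k))
  * (\prod_(k in ~: U) (1 - p f k * M k)).

Definition requested (U : {set 'I_n}) (d : demand) : {set 'I_m} :=
  [set d k | k in U].

(* f = argmax_{g in f(U)} lambda(u,g), ties broken towards the smallest index *)
Definition is_argmax (U : {set 'I_n}) (u : 'I_n) (d : demand) (f : 'I_m) : bool :=
  [&& f \in requested U d,
      [forall g in requested U d, lambda U u g <= lambda U u f] &
      [forall g in requested U d, (g < f)%N ==> (lambda U u g < lambda U u f)]].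

Definition rho (f : 'I_m) (u : 'I_n) (U : {set 'I_n}) : R :=
  \sum_(d : demand) demand_prob d * (is_argmax U u d f)%:R.

Definition psi : R :=
  \sum_(1 <= l < n.+1) \sum_(U : {set 'I_n} | #|U| == l)
    \sum_(f : 'I_m) \sum_(u in U) rho f u U * lambda U u f.

Definition Rub : R := Order.min psi mbar.

Definition prob_rate_within (eps : R) (B : nat) : R :=
  \sum_(C : config B) cache_prob C * ((cond_rate C <= Rub + eps)%R)%:R.

End Caching.

(* Main.v *)
Require Import Defs.
From HB Require Import structures.
From mathcomp Require Import all_boot all_order all_algebra.
From mathcomp Require Import all_classical all_reals all_analysis.
From mathcomp Require Import lra.
Import Order.TTheory GRing.Theory Num.Theory.
Import numFieldNormedType.Exports.
Local Open Scope ring_scope.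

Lemma chrom_le (T K : finType) (V : {set T}) (e : rel T) (g : T -> K) :
  (forall x y, x \in V -> y \in V -> x != y -> e x y -> g x != g y) ->
  (chromatic V e <= #|g @: V|.+1)%N.
Proof.
move=> Hg; rewrite /chromatic; case: ex_minnP => k _ Hmin; apply: Hmin.
apply/existsP; exists [ffun x => inord (index (g x) (enum (g @: V)))].
apply/forallP => x; apply/implyP => xV; apply/forallP => y; apply/implyP => yV.
apply/implyP => /andP[nxy exy]; rewrite !ffunE.
have gx : g x \in enum (g @: V) by rewrite mem_enum imset_f.
have gy : g y \in enum (g @: V) by rewrite mem_enum imset_f.
apply: contra (Hg x y xV yV nxy exy) => /eqP E.
have : index (g x) (enum (g @: V)) = index (g y) (enum (g @: V)).
  move/(congr1 (@nat_of_ord _)): E; by rewrite !inordK // ltnS cardE index_size.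
by move=> E2; apply/eqP; rewrite -(nth_index (g x) gx) E2 nth_index.
Qed.
Lemma sum_prod_ffun (R : realType) (m n : nat) (F : 'I_n -> 'I_m -> R) :
  \sum_(d : demand m n) \prod_(v : 'I_n) F v (d v) = \prod_(v : 'I_n) \sum_(j : 'I_m) F v j.
Proof. by rewrite bigA_distr_bigA. Qed.

Lemma marg (R : realType) (m n : nat) (q : 'I_m -> 'I_n -> R)
  (Hq1 : forall u, \sum_(f : 'I_m) q f u = 1) (u : 'I_n) (h : 'I_m -> R) :
  \sum_(d : demand m n) demand_prob q d * h (d u) = \sum_(f : 'I_m) q f u * h f.
Proof.
pose F v j := if v == u then q j u * h j else q j v.
transitivity (\sum_(d : demand m n) \prod_(v : 'I_n) F v (d v)).
  apply: eq_bigr => d _; rewrite /demand_prob (bigD1 u) //= [RHS](bigD1 u) //=.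
  rewrite /F eqxx mulrAC; congr (_ * _); apply: eq_bigr => v /negbTE ->//.
rewrite sum_prod_ffun (bigD1 u) //= /F eqxx.
rewrite [X in _ * X]big1 ?mulr1 // => v /negbTE vu.
by under eq_bigr do rewrite vu; apply: Hq1.
Qed.

Lemma demand_prob_ge0 (R : realType) (m n : nat) (q : 'I_m -> 'I_n -> R)
  (Hq0 : forall f u, 0 <= q f u) d : 0 <= demand_prob q d.
Proof. by apply: prodr_ge0. Qed.

Lemma demand_sum1 (R : realType) (m n : nat) (q : 'I_m -> 'I_n -> R)
  (Hq1 : forall u, \sum_(f : 'I_m) q f u = 1) :
  \sum_(d : demand m n) demand_prob q d = 1.
Proof. by rewrite /demand_prob (@sum_prod_ffun R m n (fun v j => q j v)) big1. Qed.

Lemma mbarE (R : realType) (m n : nat) (q : 'I_m -> 'I_n -> R)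
  (Hq1 : forall u, \sum_(f : 'I_m) q f u = 1) :
  \sum_(d : demand m n) demand_prob q d * (#|requested [set: 'I_n] d|)%:R = mbar q.
Proof.
rewrite /mbar; transitivity (\sum_(d : demand m n) \sum_(f : 'I_m)
   demand_prob q d * (f \in requested [set: 'I_n] d)%:R).
  apply: eq_bigr => d _; rewrite -mulr_sumr; congr (_ * _).
  by rewrite cardE -sum1_size big_enum /= natr_sum [RHS](bigID (fun f => f \in requested [set: 'I_n] d)) /= [X in _ + X]big1 ?addr0 //; [apply: eq_bigr => f ->| move=> f /negbTE ->].
rewrite exchange_big /=; apply: eq_bigr => f _.
transitivity (\sum_(d : demand m n) (demand_prob q d -
   \prod_(v : 'I_n) (q (d v) v * (d v != f)%:R))).
  apply: eq_bigr => d _; rewrite /demand_prob.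
  case: (boolP (f \in requested [set: 'I_n] d)) => Hf.
    rewrite mulr1 -[LHS]subr0; congr (_ - _); apply/esym/eqP; apply/prodf_eq0.
    by case/imsetP: Hf => u _ ->; exists u => //; rewrite eqxx mulr0.
  rewrite mulr0; apply/esym/eqP; rewrite subr_eq0; apply/eqP/eq_bigr => v _.
  case: eqP => [E|]; last by rewrite mulr1.
  by case/negP: Hf; rewrite -E; apply: imset_f.
rewrite sumrB demand_sum1 //; congr (_ - _).
rewrite (@sum_prod_ffun R m n (fun v j => q j v * (j != f)%:R)); apply: eq_bigr => v _.
rewrite (bigD1 f) //= eqxx mulr0 add0r.
rewrite (eq_bigr (fun j => q j v)); last by move=> j ->; rewrite mulr1.
have := Hq1 v; rewrite (bigD1 f) //= => Hv.
by rewrite -[X in _ = X - _]Hv addrAC subrr add0r.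
Qed.
Lemma sum_set_prod (R : realType) (T : finType) (c : T -> bool -> R) :
  \sum_(U : {set T}) \prod_(k : T) c k (k \in U) = \prod_(k : T) (c k true + c k false).
Proof.
transitivity (\prod_(k : T) \sum_(b : bool) c k b); last first.
  by apply: eq_bigr => k _; rewrite big_bool.
rewrite bigA_distr_bigA /=.
rewrite (reindex (fun g : {ffun T -> bool} => [set k | g k])) /=; last first.
  exists (fun U : {set T} => [ffun k => k \in U]) => g _.
    by apply/ffunP => k; rewrite ffunE inE.
  by apply/setP => k; rewrite inE ffunE.
by apply: eq_bigr => g _; apply: eq_bigr => k _; rewrite inE.
Qed.

Lemma lambda_sum (R : realType) (m n : nat) (M : 'I_n -> R) (p : 'I_m -> 'I_n -> R)
  (u : 'I_n) (f : 'I_m) :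
  \sum_(U : {set 'I_n} | u \in U) lambda M p U u f = 1 - p f u * M u.
Proof.
pose a k := p f k * M k.
pose c k (b : bool) := if k == u then (if b then 1 - a u else 0)
                       else (if b then a k else 1 - a k).
have := @sum_set_prod R _ c.
have Hc : c u true + c u false = 1 - a u by rewrite /c eqxx addr0.
rewrite [X in _ = X -> _](bigD1 u) //= Hc.
rewrite [X in _ = _ * X -> _]big1 ?mulr1; last first.
  by move=> k /negbTE ku; rewrite /c ku addrC subrK.
move=> <-; rewrite [RHS](bigID (fun U : {set 'I_n} => u \in U)) /= [X in _ = _ + X]big1 ?addr0.
  apply: eq_bigr => U uU; rewrite (bigD1 u) //= /c eqxx uU /lambda.
  rewrite -mulrA; congr (_ * _).
  rewrite [RHS](bigID (fun k => k \in U)) /=; congr (_ * _).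
    apply: eq_big => [k|k]; first by rewrite in_setD1 andbC.
    by rewrite in_setD1 => /andP[/negbTE -> ->].
  have H1 : forall k, k \in ~: U -> k != u.
    by move=> k; rewrite finset.in_setC; apply: contra => /eqP ->.
  apply: eq_big => [k|k kU]; last first.
    by rewrite (negbTE (H1 k kU)); move: kU; rewrite finset.in_setC => /negbTE ->.
  case: (boolP (k \in ~: U)) => [kU|]; first by rewrite H1 //; move: kU; rewrite finset.in_setC.
  by rewrite finset.in_setC negbK => ->; rewrite andbF.
move=> U /negbTE uU; apply/eqP/prodf_eq0; exists u => //.
by rewrite /c eqxx uU.
Qed.
Lemma argmax_ex (R : realType) (m n : nat) (M : 'I_n -> R) (p : 'I_m -> 'I_n -> R)
  (U : {set 'I_n}) (u : 'I_n) (d : demand m n) : u \in U ->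
  exists f0, is_argmax M p U u d f0 && (lambda M p U u (d u) <= lambda M p U u f0).
Proof.
move=> uU; set A := requested U d; set L := lambda M p U u.
have duA : d u \in A by apply: imset_f.
pose ord := fun x y : R => y <= x.
have [g gA gmax] := @extremumP R _ ord (d u) (mem A) L (fun x => lexx x)
   (fun x y z h1 h2 => le_trans h2 h1) (fun x y => le_total y x) duA.
pose S := [pred f | (f \in A) && (L g <= L f)].
have gS : S g by apply/andP; split.
have [f0 f0S f0min] := arg_minnP (fun f : 'I_m => val f) gS.
move: f0S; rewrite /S /= => /andP[f0A gf0].
have Lf0 : forall h, h \in A -> L h <= L f0.
  by move=> h hA; apply: le_trans (gmax h hA) gf0.
exists f0; rewrite (Lf0 _ duA) andbT /is_argmax f0A /=.
apply/andP; split; apply/forallP => h; apply/implyP => hA; first exact: Lf0.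
apply/implyP => hlt; rewrite lt_def Lf0 // andbT.
apply/negP => /eqP E; have hS : S h.
  by apply/andP; split => //; rewrite /L -E.
by have := f0min h hS; rewrite leqNgt hlt.
Qed.
Lemma lambda_ge0 (R : realType) (m n : nat) (M : 'I_n -> R) (p : 'I_m -> 'I_n -> R)
  (Hp : forall f u, 0 <= M u * p f u <= 1) U u f : 0 <= lambda M p U u f.
Proof.
have H k : 0 <= p f k * M k <= 1 by rewrite mulrC.
rewrite /lambda; apply: mulr_ge0; first apply: mulr_ge0.
- by case/andP: (H u) => _; rewrite subr_ge0.
- by apply: prodr_ge0 => k _; case/andP: (H k).
- by apply: prodr_ge0 => k _; case/andP: (H k) => _; rewrite subr_ge0.
Qed.

Lemma rho_lambda (R : realType) (m n : nat) (M : 'I_n -> R) (q p : 'I_m -> 'I_n -> R)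
  (Hq0 : forall f u, 0 <= q f u)
  (Hp : forall f u, 0 <= M u * p f u <= 1) (U : {set 'I_n}) (u : 'I_n) : u \in U ->
  \sum_(d : demand m n) demand_prob q d * lambda M p U u (d u)
  <= \sum_(f : 'I_m) rho M q p f u U * lambda M p U u f.
Proof.
move=> uU; rewrite /rho.
under [X in _ <= X]eq_bigr do rewrite mulr_suml.
rewrite exchange_big /=; apply: ler_sum => d _.
under [X in _ <= X]eq_bigr do rewrite -mulrA.
rewrite -mulr_sumr; apply: ler_wpM2l; first exact: demand_prob_ge0.
have [f0 /andP[Hf0 Hle]] := @argmax_ex R m n M p U u d uU.
rewrite (bigD1 f0) //= Hf0 mul1r; apply: le_trans Hle _.
rewrite lerDl; apply: sumr_ge0 => f _; apply: mulr_ge0 => //.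
exact: lambda_ge0.
Qed.

Lemma psiE (R : realType) (m n : nat) (M : 'I_n -> R) (q p : 'I_m -> 'I_n -> R) :
  psi M q p = \sum_(U : {set 'I_n}) \sum_(u in U) \sum_(f : 'I_m) rho M q p f u U * lambda M p U u f.
Proof.
rewrite /psi.
under eq_bigr do under eq_bigr do rewrite exchange_big /=.
under eq_bigr do rewrite big_mkcond /=.
rewrite exchange_big /=; apply: eq_bigr => U _.
case: (set_0Vmem U) => [->|[u uU]].
  by rewrite big_set0; apply: big1 => l _; case: ifP.
set H := \sum_(u in U) _.
have E l : (if #|U| == l then H else 0) = (#|U| == l)%:R * H.
  by case: eqP; rewrite ?mul1r ?mul0r.
under eq_bigr do rewrite E.
rewrite -mulr_suml -[RHS]mul1r; congr (_ * _).
rewrite -natr_sum -(big_mkcond (fun l => #|U| == l) (fun _ => 1%N)) /= sum1_count.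
have -> : count (fun l => #|U| == l) (index_iota 1 n.+1) = count_mem #|U| (index_iota 1 n.+1).
  by apply: eq_count => l; rewrite /= eq_sym.
rewrite count_uniq_mem ?iota_uniq //.
suff -> : #|U| \in index_iota 1 n.+1 by [].
rewrite mem_iota add1n subn1 /= ltnS (leq_trans (max_card _)) ?card_ord // andbT card_gt0; apply/set0Pn; by exists u.
Qed.

Lemma psi_ge (R : realType) (m n : nat) (M : 'I_n -> R) (q p : 'I_m -> 'I_n -> R)
  (Hq0 : forall f u, 0 <= q f u)
  (Hq1 : forall u, \sum_(f : 'I_m) q f u = 1)
  (Hp : forall f u, 0 <= M u * p f u <= 1) :
  \sum_(u : 'I_n) \sum_(f : 'I_m) q f u * (1 - p f u * M u) <= psi M q p.
Proof.
rewrite psiE.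
apply: (@le_trans _ _ (\sum_(U : {set 'I_n}) \sum_(u in U)
   \sum_(d : demand m n) demand_prob q d * lambda M p U u (d u))); last first.
  by apply: ler_sum => U _; apply: ler_sum => u uU; apply: rho_lambda.
rewrite le_eqVlt; apply/orP; left; apply/eqP.
under eq_bigr => u _ do rewrite -(@marg R m n q Hq1 u (fun f => 1 - p f u * M u)).
under [RHS]eq_bigr do rewrite big_mkcond /=.
rewrite [RHS]exchange_big /=; apply: eq_bigr => u _.
rewrite [RHS](eq_bigr (fun U : {set 'I_n} => (u \in U)%:R *
   \sum_(d : demand m n) demand_prob q d * lambda M p U u (d u))); last first.
  by move=> U _; case: ifP; rewrite ?mul1r ?mul0r.
under [RHS]eq_bigr do rewrite mulr_sumr.
rewrite exchange_big /=; apply: eq_bigr => d _.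
rewrite -(@lambda_sum R m n M p u (d u)) mulr_sumr [RHS](bigID (fun U : {set 'I_n} => u \in U)) /=.
rewrite [X in _ = _ + X]big1 ?addr0; last by move=> U /negbTE ->; rewrite mul0r.
by apply: eq_bigr => U ->; rewrite mul1r mulrCA.
Qed.
Lemma chrom_vert (m n B : nat) (C : config m n B) (d : demand m n) :
  (cic_transmissions C d <= #|cg_vertices C d|.+1)%N.
Proof.
apply: leq_trans (@chrom_le _ _ _ _ id _) _ => //.
by rewrite ltnS leq_imset_card.
Qed.

Lemma chrom_req (m n B : nat) (C : config m n B) (d : demand m n) :
  (cic_transmissions C d <= (#|requested [set: 'I_n] d| * B).+1)%N.
Proof.
apply: leq_trans (@chrom_le _ _ _ _ (fun v => (d v.1, v.2)) _) _.
  move=> x y _ _ _ /andP[_ /orP[/andP[_ H]|/andP[_ H]]] //.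
  by rewrite eq_sym.
have Hs : [set (d v.1, v.2) | v in cg_vertices C d] \subset
   finset.setX (requested [set: 'I_n] d) [set: 'I_B].
  apply/fintype.subsetP => z /imsetP[v _ ->]; rewrite !inE /= andbT; exact: imset_f.
rewrite ltnS; apply: leq_trans (subset_leq_card Hs) _.
by rewrite cardsX cardsT card_ord.
Qed.

Lemma card_vert (R : realType) (m n B : nat) (C : config m n B) (d : demand m n) :
  (#|cg_vertices C d|)%:R = \sum_(u : 'I_n) (B%:R - (#|C u (d u)|)%:R) :> R.
Proof.
have -> : #|cg_vertices C d| = (\sum_(u : 'I_n) #|~: C u (d u)|)%N.
  rewrite -sum1_card big_mkcond /=; symmetry.
  transitivity (\sum_(u : 'I_n) \sum_(j : 'I_B)
     (if (u, j) \in cg_vertices C d then 1%N else 0%N)).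
    apply: eq_bigr => u _; rewrite -sum1_card big_mkcond /=.
    by apply: eq_bigr => j _; rewrite !inE.
  by rewrite pair_big /=; apply: eq_bigr => -[u j].
rewrite natr_sum; apply: eq_bigr => u _.
have H := cardsC (C u (d u)); rewrite card_ord in H.
have H' : (B%:R : R) = (#|C u (d u)|)%:R + (#|~: C u (d u)|)%:R by rewrite -natrD H.
by rewrite H' addrAC subrr add0r.
Qed.

Lemma rate_mbar (R : realType) (m n : nat) (q : 'I_m -> 'I_n -> R)
  (Hq0 : forall f u, 0 <= q f u)
  (Hq1 : forall u, \sum_(f : 'I_m) q f u = 1) (B : nat) (C : config m n B) :
  (0 < B)%N -> cond_rate q C <= mbar q + B%:R^-1.
Proof.
move=> B0; have B0' : (B%:R : R) != 0 by rewrite pnatr_eq0 -lt0n.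
rewrite /cond_rate; apply: (@le_trans _ _ (\sum_(d : demand m n) demand_prob q d *
   (((#|requested [set: 'I_n] d| * B).+1)%:R / B%:R))).
  apply: ler_sum => d _; apply: ler_wpM2l; first exact: demand_prob_ge0.
  by apply: ler_wpM2r; [rewrite invr_ge0 ler0n | rewrite ler_nat chrom_req].
rewrite le_eqVlt; apply/orP; left; apply/eqP.
have E k : (((k * B).+1)%:R / B%:R : R) = k%:R + B%:R^-1.
  by rewrite -addn1 natrD natrM mulrDl mulfK // mul1r.
under eq_bigr do rewrite E mulrDr.
rewrite big_split /= (@mbarE R m n q Hq1) -mulr_suml (@demand_sum1 R m n q Hq1) mul1r //.
Qed.

Lemma rate_X (R : realType) (m n : nat) (M : 'I_n -> R) (q p : 'I_m -> 'I_n -> R)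
  (Hq0 : forall f u, 0 <= q f u)
  (Hq1 : forall u, \sum_(f : 'I_m) q f u = 1) (B : nat) (C : config m n B) :
  (0 < B)%N -> (forall u f, #|C u f| = ncached M p B f u) ->
  cond_rate q C <= \sum_(u : 'I_n) \sum_(f : 'I_m) q f u * (1 - p f u * M u)
                   + n.+1%:R / B%:R.
Proof.
move=> B0 HC; have B0' : (B%:R : R) != 0 by rewrite pnatr_eq0 -lt0n.
have Bpos : (0 : R) < B%:R by rewrite ltr0n.
pose g u f : R := (B%:R - (ncached M p B f u)%:R) / B%:R.
rewrite /cond_rate; apply: (@le_trans _ _ (\sum_(d : demand m n) demand_prob q d *
   (\sum_(u : 'I_n) g u (d u) + B%:R^-1))).
  apply: ler_sum => d _; apply: ler_wpM2l; first exact: demand_prob_ge0.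
  apply: (@le_trans _ _ ((#|cg_vertices C d|.+1)%:R / B%:R)).
    by apply: ler_wpM2r; [rewrite invr_ge0 ler0n | rewrite ler_nat chrom_vert].
  rewrite -addn1 natrD (card_vert R) mulrDl mul1r; apply: lerD => //.
  by rewrite mulr_suml; apply: ler_sum => u _; rewrite /g HC.
under eq_bigr do rewrite mulrDr mulr_sumr.
rewrite big_split /= -mulr_suml (@demand_sum1 R m n q Hq1) mul1r exchange_big /=.
under eq_bigr do rewrite (@marg R m n q Hq1 _ (g _)).
apply: (@le_trans _ _ (\sum_(u : 'I_n) \sum_(f : 'I_m) q f u * (1 - p f u * M u + B%:R^-1)
   + B%:R^-1)).
  apply: lerD => //; apply: ler_sum => u _; apply: ler_sum => f _.
  apply: ler_wpM2l => //; rewrite /g ler_pdivrMr //.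
  have H := truncnS_gt (p f u * M u * B%:R); rewrite /ncached.
  rewrite mulrDl mulVf // mulrBl mul1r; rewrite -natr1 in H; lra.
rewrite le_eqVlt; apply/orP; left; apply/eqP.
have E u : \sum_(f : 'I_m) q f u * (1 - p f u * M u + B%:R^-1) =
   \sum_(f : 'I_m) q f u * (1 - p f u * M u) + B%:R^-1.
  by rewrite -[X in _ + X]mul1r -(Hq1 u) mulr_suml -big_split; apply: eq_bigr => f _; rewrite mulrDr.
rewrite (eq_bigr _ (fun u _ => E u)).
rewrite big_split /= sumr_const card_ord -addrA; congr (_ + _).
by rewrite -natr1 mulrDl mul1r mulr_natl.
Qed.
Lemma ncached_le (R : realType) (m n : nat) (M : 'I_n -> R) (p : 'I_m -> 'I_n -> R)
  (Hp : forall f u, 0 <= M u * p f u <= 1) B f u : (ncached M p B f u <= B)%N.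
Proof.
rewrite /ncached truncn_le_nat; have := Hp f u; rewrite mulrC => /andP[H0 H1].
have HB : (0 : R) <= B%:R by rewrite ler0n.
rewrite -natr1; nra.
Qed.

Lemma cache_sum1 (R : realType) (m n : nat) (M : 'I_n -> R) (p : 'I_m -> 'I_n -> R)
  (Hp : forall f u, 0 <= M u * p f u <= 1) B :
  \sum_(C : config m n B) cache_prob M p C = 1.
Proof.
rewrite /cache_prob -(bigA_distr_bigA (fun u (Cu : {ffun 'I_m -> {set 'I_B}}) =>
   \prod_(f : 'I_m) ((#|Cu f| == ncached M p B f u)%:R / ('C(B, ncached M p B f u))%:R : R))).
apply: big1 => u _; rewrite -(bigA_distr_bigA (fun f (S : {set 'I_B}) =>
   ((#|S| == ncached M p B f u)%:R / ('C(B, ncached M p B f u))%:R : R))).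
apply: big1 => f _; rewrite -mulr_suml -natr_sum.
rewrite -(big_mkcond (fun S : {set 'I_B} => #|S| == ncached M p B f u) (fun _ => 1%N)) /=.
rewrite sum1_card (_ : #|_| = #|[set S : {set 'I_B} | #|S| == ncached M p B f u]|); last by apply: eq_card => S; rewrite inE.
rewrite card_draws card_ord mulfV // pnatr_eq0 -lt0n bin_gt0.
exact: ncached_le.
Qed.

Local Open Scope classical_set_scope.
Local Open Scope ring_scope.

Lemma smallB (R : realType) (eps : R) (k B : nat) : 0 < eps ->
  ((Num.truncn (k%:R / eps)).+1 <= B)%N -> k%:R / B%:R <= eps.
Proof.
move=> e0 HB; have := truncnS_gt (k%:R / eps).
have HB' : ((Num.truncn (k%:R / eps)).+1%:R : R) <= B%:R by rewrite ler_nat.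
move=> H; have Hlt : k%:R / eps < B%:R by apply: lt_le_trans H HB'.
have Bpos : (0 : R) < B%:R by apply: le_lt_trans Hlt; rewrite divr_ge0 // ?ler0n ?ltW.
rewrite ler_pdivrMr //; rewrite ltr_pdivrMr // in Hlt; rewrite mulrC; exact: ltW.
Qed.

Theorem theorem1 (R : realType) (m n : nat) (M : 'I_n -> R)
  (q p : 'I_m -> 'I_n -> R)
  (HM : forall u, 0 <= M u)
  (Hq0 : forall f u, 0 <= q f u)
  (Hq1 : forall u, \sum_(f : 'I_m) q f u = 1)
  (Hp : forall f u, 0 <= M u * p f u <= 1)
  (Hp1 : forall u, \sum_(f : 'I_m) p f u = 1) :
  forall eps : R, 0 < eps ->
    (fun B : nat => prob_rate_within M q p eps B) @ \oo --> (1 : R).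
Proof.
move=> eps e0; apply: cvg_near_cst.
exists (Num.truncn (n.+1%:R / eps)).+1 => // B /= HB.
have B0 : (0 < B)%N by apply: leq_trans HB.
have Hn := @smallB R eps n.+1 B e0 HB.
have H1 : B%:R^-1 <= eps.
  apply: le_trans Hn; rewrite -[X in X <= _]mul1r ler_wpM2r ?invr_ge0 ?ler0n //.
  by rewrite ler1n.
rewrite /prob_rate_within -[RHS](@cache_sum1 R m n M p Hp B).
apply: eq_bigr => C _.
case: (boolP [forall u, forall f, #|C u f| == ncached M p B f u]) => [/forallP Hv|].
  have HC : forall u f, #|C u f| = ncached M p B f u.
    by move=> u f; apply/eqP; move/forallP: (Hv u); apply.
  suff -> : (cond_rate q C <= Rub M q p + eps) by rewrite mulr1.
  rewrite /Rub -lerBlDr le_min; apply/andP; split; rewrite lerBlDr.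
    apply: le_trans (@rate_X R m n M q p Hq0 Hq1 B C B0 HC) _.
    by apply: lerD => //; exact: (@psi_ge R m n M q p Hq0 Hq1 Hp).
  by apply: le_trans (@rate_mbar R m n q Hq0 Hq1 B C B0) _; apply: lerD.
rewrite negb_forall => /existsP[u]; rewrite negb_forall => /existsP[f bad].
suff -> : cache_prob M p C = 0 by rewrite mul0r.
rewrite /cache_prob (bigD1 u) //= (bigD1 f) //= (negbTE bad) mul0r mul0r.
by rewrite mul0r.
Qed.
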